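(* Let $k\ge1$ be an integer, let $\mathbf G$ be an abelian group, let $A_1,\dots,A_k,B\subseteq\mathbf G$ be finite, let $W,Y\subseteq\mathbf G^k$ be finite and $X,Z\subseteq\mathbf G$ be finite. Then (i) $|W\times X|\cdot|Y-\Delta(Z)|\le|Y\times W\times Z-\Delta(X)|$ (here $Y\times W\times Z\subseteq\mathbf G^{2k+1}$); (ii) for every $m\in\{1,\dots,k-1\}$, $$|A_1\times\dots\times A_k-\Delta(B)|\le|A_1\times\dots\times A_m-\Delta(A_{m+1})|\cdot|A_{m+1}\times\dots\times A_k-\Delta(B)|;$$ (iii) $|Y\times Z-\Delta(X)|=|Y\times X-\Delta(Z)|$ (here $Y\times Z, Y\times X\subseteq\mathbf G^{k+1}$).
   Context: For $S\subseteq\mathbf G$ and an integer $d\ge1$, $\Delta(S)=\Delta_d(S)=\{(s,s,\dots,s)\in\mathbf G^d: s\in S\}$, the dimension $d$ being that of the set it is subtracted from. For $U,V\subseteq\mathbf G^d$, $U-V=\{u-v:u\in U,v\in V\}$ (coordinatewise). *)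

(* Defs.v *)
From HB Require Import structures.
From mathcomp Require Import all_boot all_order all_algebra.
From mathcomp Require Import finmap.
Set Implicit Arguments. Unset Strict Implicit. Unset Printing Implicit Defensive.
Import GRing.Theory.
Local Open Scope fset_scope.

(* Points of G^d are represented as sequences of length d over G. *)
Section Defs.
Variable G : zmodType.

(* U - Delta(S): coordinatewise u - (s,...,s), the dimension being that of u. *)
Definition dsub (U : {fset seq G}) (S : {fset G}) : {fset seq G} :=
  [fset [seq (x - s)%R | x <- u] | u in U, s in S].

Definition cartp (U V : {fset seq G}) : {fset seq G} :=
  [fset u ++ v | u in U, v in V].

Definition lift1 (X : {fset G}) : {fset seq G} := [fset [:: x] | x in X].

Definition prodL (s : seq {fset G}) : {fset seq G} :=
  foldr (fun A P => cartp (lift1 A) P) [fset [::]] s.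
End Defs.

(* Main.v *)
Require Import Defs.
From HB Require Import structures.
From mathcomp Require Import all_boot all_order all_algebra.
From mathcomp Require Import finmap.
Local Open Scope fset_scope.
Set Implicit Arguments. Unset Strict Implicit. Unset Printing Implicit Defensive.
Import GRing.Theory.

Lemma card_imfset2_le (T1 T2 K : choiceType) (f : T1 -> T2 -> K) (A : {fset T1}) (B : {fset T2}) :
  (#|` [fset f x y | x in A, y in B]| <= #|` A| * #|` B|)%N.
Proof.
rewrite unlock /= size_seq_fset (leq_trans (size_undup _)) //.
by rewrite size_allpairs_dep sumnE big_map big_const_seq count_predT iter_addn_0 mulnC.
Qed.

Lemma card_imfset2_inj (T1 T2 K : choiceType) (f : T1 -> T2 -> K) (A : {fset T1}) (B : {fset T2}) :
  (forall x1 x2 y1 y2, x1 \in A -> x2 \in A -> y1 \in B -> y2 \in B -> f x1 y1 = f x2 y2 -> x1 = x2 /\ y1 = y2) ->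
  #|` [fset f x y | x in A, y in B]| = (#|` A| * #|` B|)%N.
Proof.
move=> finj.
rewrite card_fset_sum1 big_imfset2 /=.
  rewrite -card_fset_sum1 big_const_seq count_predT iter_addn_0 mulnC.
  by rewrite !card_fset_sum1 sum1_size.
move=> [x1 y1] [x2 y2] /andP[/= h1 h2] /andP[/= h3 h4] /= e.
by have [e1 e2] := finj _ _ _ _ h1 h3 h2 h4 e; subst.
Qed.

Section Help.
Variable G : zmodType.
Local Open Scope ring_scope.
Implicit Types (U V : {fset seq G}) (S : {fset G}).

Lemma dsubP U S s : reflect (exists2 u, u \in U & exists2 x, x \in S & s = [seq a - x | a <- u])
  (s \in dsub U S).
Proof.
apply: (iffP (imfset2P _ _ _ _ _)) => [[u hu [x hx ->]]|[u hu [x hx ->]]]; by exists u => //; exists x.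
Qed.

Lemma cartpP U V s : reflect (exists2 u, u \in U & exists2 v, v \in V & s = u ++ v)
  (s \in cartp U V).
Proof.
apply: (iffP (imfset2P _ _ _ _ _)) => [[u hu [x hx ->]]|[u hu [x hx ->]]]; by exists u => //; exists x.
Qed.

Lemma lift1P S s : reflect (exists2 x, x \in S & s = [:: x]) (s \in lift1 S).
Proof. exact: (iffP (imfsetP _ _ _ _)). Qed.

Lemma mem_dsub U S u x : u \in U -> x \in S -> [seq a - x | a <- u] \in dsub U S.
Proof. by move=> hu hx; apply/dsubP; exists u => //; exists x. Qed.

Lemma mem_cartp U V u v : u \in U -> v \in V -> u ++ v \in cartp U V.
Proof. by move=> hu hv; apply/cartpP; exists u => //; exists v. Qed.

Lemma mem_lift1 S x : x \in S -> [:: x] \in lift1 S.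
Proof. by move=> hx; apply/lift1P; exists x. Qed.

Lemma map_subK (x : G) s t : [seq a - x | a <- s] = [seq a - x | a <- t] -> s = t.
Proof. by apply: inj_map => a b /addIr. Qed.

Lemma map_subsub (x z : G) s : [seq a - (z - x) | a <- [seq a - x | a <- s]] = [seq a - z | a <- s].
Proof. by rewrite -map_comp; apply: eq_map => a /=; rewrite opprB addrA subrK. Qed.

Lemma prodL_cons (A : {fset G}) (L : seq {fset G}) s : s \in prodL (A :: L) ->
  exists a t, [/\ s = a :: t, a \in A & t \in prodL L].
Proof.
by move=> /cartpP [u /lift1P [a ha ->] [t ht ->]]; exists a, t.
Qed.

Lemma prodL_cat (L1 L2 : seq {fset G}) s : s \in prodL (L1 ++ L2) ->
  exists s1 s2, [/\ s = s1 ++ s2, s1 \in prodL L1 & s2 \in prodL L2].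
Proof.
elim: L1 s => [|A L1 IH] s /=.
  by move=> hs; exists [::], s; split => //; rewrite in_fset1.
move=> /(prodL_cons (L:=L1 ++ L2)) [a [t [-> ha /IH [s1 [s2 [-> h1 h2]]]]]].
exists (a :: s1), s2; split => //.
by apply: (mem_cartp (u := [:: a])) => //; apply: mem_lift1.
Qed.

Definition flipl (s : seq G) := [seq a - last 0 s | a <- take (size s).-1 s] ++ [:: - last 0 s].

Lemma flipl_eq (y : seq G) (x z : G) :
  flipl [seq a - x | a <- y ++ [:: z]] = [seq a - z | a <- y ++ [:: x]].
Proof.
rewrite /flipl map_cat /= size_cat size_map addn1 /= take_size_cat ?size_map //.
rewrite last_cat /= map_subsub map_cat /=.
by rewrite opprB.
Qed.


Lemma dsub_cart1P (Y : {fset seq G}) (S Z : {fset G}) s : reflect (exists y x z, [/\ y \in Y, x \in S, z \in Z & s = [seq a - z | a <- y ++ [:: x]]])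
  (s \in dsub (cartp Y (lift1 S)) Z).
Proof.
apply: (iffP (dsubP _ _ _)) => [[u /cartpP [y hy [v /lift1P [x hx ->] ->]] [z hz ->]]|[y [x [z [hy hx hz ->]]]]].
  by exists y, x, z.
exists (y ++ [:: x]); last by exists z. by apply: mem_cartp => //; apply: mem_lift1.
Qed.

Lemma part3 (Y : {fset seq G}) (X Z : {fset G}) : (#|` dsub (cartp Y (lift1 Z)) X| <= #|` dsub (cartp Y (lift1 X)) Z|)%N.
Proof.
have /eqP <- : #|` flipl @` dsub (cartp Y (lift1 Z)) X| == #|` dsub (cartp Y (lift1 Z)) X|.
  apply/card_in_imfsetP => s1 s2 /dsub_cart1P [y1 [z1 [x1 [_ _ _ ->]]]]
    /dsub_cart1P [y2 [z2 [x2 [_ _ _ ->]]]] e.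
  by move: (congr1 flipl e); rewrite !flipl_eq.

apply: fsubset_leq_card; apply/fsubsetP => s /imfsetP [t /= /dsub_cart1P [y [z [x [hy hz hx ->]]]] ->].
by rewrite flipl_eq; apply/dsub_cart1P; exists y, x, z.
Qed.

Lemma part2 (L1 L2 : seq {fset G}) (C B : {fset G}) :
  (#|` dsub (prodL (L1 ++ C :: L2)) B| <=
     #|` dsub (prodL L1) C| * #|` dsub (prodL (C :: L2)) B|)%N.
Proof.
pose H (u v : seq G) := [seq a + head 0 v | a <- u] ++ v.
apply: leq_trans (card_imfset2_le H _ _).
apply: fsubset_leq_card; apply/fsubsetP => s /dsubP [a /prodL_cat [a1 [a2 [-> h1 h2]]] [b hb ->]].
have [x [t [ea2 hx ht]]] := prodL_cons h2.
apply/imfset2P; exists [seq c - x | c <- a1]; first exact: mem_dsub.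
exists [seq c - b | c <- a2]; first exact: mem_dsub.
rewrite /H ea2 /= map_cat -map_comp; congr (_ ++ _).
by apply: eq_map => c /=; rewrite addrA subrK.
Qed.

Lemma part1 (k : nat) (W Y : {fset seq G}) (X Z : {fset G}) :
  {in W, forall w, size w = k} -> {in Y, forall y, size y = k} ->
  (#|` cartp W (lift1 X)| * #|` dsub Y Z| <= #|` dsub (cartp Y (cartp W (lift1 Z))) X|)%N.
Proof.
move=> hW hY.
pose Q d (p : seq G * G) := (d \in dsub Y Z) ==> [&& p.1 \in Y, p.2 \in Z & d == [seq a - p.2 | a <- p.1]].
have exQ d : exists p, Q d p.
  case: (boolP (d \in dsub Y Z)) => hd.
    move/dsubP: (hd) => [y hy [z hz ->]]; exists (y, z).
    by apply/implyP => _ /=; rewrite hy hz eqxx.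
  by exists ([::], 0); apply/implyP => hd'; case/negP: hd.
pose rep d := xchoose (exQ d).
have repP d : d \in dsub Y Z -> [/\ (rep d).1 \in Y, (rep d).2 \in Z & d = [seq a - (rep d).2 | a <- (rep d).1]].
  move=> hd; have := xchooseP (exQ d); move=> /implyP /(_ hd).
  by case/and3P => h1 h2 /eqP h3.
have cartW p : p \in cartp W (lift1 X) -> exists w x, [/\ p = w ++ [:: x], w \in W & x \in X].
  by move=> /cartpP [w hw [v /lift1P [x hx ->] ->]]; exists w, x.
pose F p d := [seq a - last 0 p | a <- (rep d).1 ++ (take k p ++ [:: (rep d).2])].
rewrite -(card_imfset2_inj (f := F)).
  apply: fsubset_leq_card; apply/fsubsetP => s /imfset2P [p /cartW [w [x [-> hw hx]]] [d /repP [h1 h2 _] ->]].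
  rewrite /F last_cat /= take_size_cat ?hW //.
  apply: mem_dsub => //; apply: mem_cartp => //; apply: mem_cartp => //; exact: mem_lift1.
move=> p1 p2 d1 d2 /cartW [w1 [x1 [-> hw1 hx1]]] /cartW [w2 [x2 [-> hw2 hx2]]] hd1 hd2.
have [r11 r12 e1] := repP _ hd1; have [r21 r22 e2] := repP _ hd2.
rewrite /F !last_cat /= !take_size_cat ?hW // !map_cat.
move/eqP; rewrite eqseq_cat ?size_map ?hY // => /andP[/eqP ey].
rewrite eqseq_cat ?size_map ?hW // => /andP[/eqP ew] /= /andP[/eqP ez _].
have ed : d1 = d2 by rewrite [LHS]e1 [RHS]e2 -(map_subsub x1 (rep d1).2) -(map_subsub x2 (rep d2).2) ey ez.
clear e1 e2.
subst d2; split => //.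
have ex : x1 = x2 by move: ez => /addrI /oppr_inj.
by subst x2; rewrite (map_subK ew).
Qed.
End Help.

Theorem theorem7 (G : zmodType) (k : nat) (A : nat -> {fset G}) (B : {fset G})
    (W Y : {fset seq G}) (X Z : {fset G}) :
  (1 <= k)%N ->
  {in W, forall w, size w = k} ->
  {in Y, forall y, size y = k} ->
  [/\ (#|` cartp W (lift1 X)| * #|` dsub Y Z| <=
         #|` dsub (cartp Y (cartp W (lift1 Z))) X|)%N,
      (forall m : nat, (1 <= m < k)%N ->
        (#|` dsub (prodL [seq A i | i <- iota 1 k]) B| <=
           #|` dsub (prodL [seq A i | i <- iota 1 m]) (A m.+1)| *
           #|` dsub (prodL [seq A i | i <- iota m.+1 (k - m)]) B|)%N)
    & #|` dsub (cartp Y (lift1 Z)) X| = #|` dsub (cartp Y (lift1 X)) Z| ].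
Proof.
move=> hk hW hY; split.
- exact: part1 hW hY.
- move=> m /andP[hm hmk].
  have [n hn] : exists n, k = (m + n.+1)%N by exists (k - m).-1; rewrite prednK ?subn_gt0 // subnKC // ltnW.
  subst k; rewrite (_ : (m + n.+1 - m = n.+1)%N); last by rewrite addKn.
  rewrite iotaD add1n /= map_cat /=.
  exact: part2.
- have h1 := part3 Y X Z; have h2 := part3 Y Z X.
  exact (anti_leq (introT andP (conj h1 h2))).
Qed.
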